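(* Let $g$ be an invertible, ergodic measure preserving transformation of a probability space $(X,\nu)$ with no periodic points. Let $B\subset X$ be measurable with $\nu(B)>0$, and let $N:B\to\{1,2,3,\dots\}$ be a measurable function such that $\tilde g(x):=g^{N(x)}(x)\in B$ for almost every $x\in B$ and $\int_B N\,d\nu<\infty$. Let $B'\subset B$ be a measurable set with $\nu(B')>0$, $\tilde g(B')=B'$, and $g_*=\tilde g|_{B'}$ invertible and $\nu$-preserving. Let $C\subset B'$ be a measurable subset with $\nu(C)>0$ and $g_*(C)=C$. Then $$\int_C N(x)\,d\nu\ge 1.$$ *)

(* Defs.v *)
From HB Require Import structures.
From mathcomp Require Import all_boot all_order all_algebra.
From mathcomp Require Import all_classical all_reals all_analysis.
Set Implicit Arguments. Unset Strict Implicit. Unset Printing Implicit Defensive.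
Import Order.TTheory GRing.Theory Num.Theory.
Local Open Scope classical_set_scope.
Local Open Scope ring_scope.

Section defs.
Context (d : measure_display) (X : measurableType d) (R : realType).

Definition invertible_mble (g : X -> X) : Prop :=
  measurable_fun setT g /\
  exists h : X -> X, [/\ measurable_fun setT h, cancel g h & cancel h g].

Definition measure_preserving (mu : {measure set X -> \bar R}) (g : X -> X) :=
  forall A, measurable A -> mu (g @^-1` A) = mu A.

Definition ergodic (mu : probability X R) (g : X -> X) :=
  forall A, measurable A -> g @^-1` A = A -> mu A = 0%E \/ mu A = 1%E.

Definition no_periodic_points (g : X -> X) :=
  forall (x : X) (n : nat), (0 < n)%N -> iter n g x <> x.

Definition induced_map (g : X -> X) (N : X -> nat) : X -> X :=
  fun x => iter (N x) g x.

Definition invertible_preserving_on (mu : {measure set X -> \bar R})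
  (D : set X) (f : X -> X) : Prop :=
  [/\ measurable_fun D f,
      (forall x, D x -> D (f x)),
      (exists h : X -> X, [/\ measurable_fun D h, (forall x, D x -> D (h x)),
          {in D, cancel f h} & {in D, cancel h f}]) &
      (forall A, measurable A -> A `<=` D -> mu (D `&` f @^-1` A) = mu A)].
End defs.

(* Main.v *)
Require Import Defs.
From HB Require Import structures.
From mathcomp Require Import all_boot all_order all_algebra.
From mathcomp Require Import all_classical all_reals all_analysis.
Import Order.TTheory GRing.Theory Num.Theory.
Local Open Scope classical_set_scope.
Local Open Scope ring_scope.

Theorem corollary3p8 (d : measure_display) (X : measurableType d) (R : realType)
  (nu : probability X R) (g : X -> X)
  (g_inv : invertible_mble g)
  (g_mp : measure_preserving nu g)
  (g_erg : ergodic nu g)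
  (g_aper : no_periodic_points g)
  (B : set X) (mB : measurable B) (nuB : (0 < nu B)%E)
  (N : X -> nat) (N_pos : forall x, B x -> (0 < N x)%N)
  (mN : measurable_fun B (fun x => (N x)%:R : R))
  (N_ret : {ae nu, forall x, B x -> B (induced_map g N x)})
  (N_int : (\int[nu]_(x in B) ((N x)%:R : R)%:E < +oo)%E)
  (B' : set X) (mB' : measurable B') (B'B : B' `<=` B) (nuB' : (0 < nu B')%E)
  (B'inv : induced_map g N @` B' = B')
  (gstar : invertible_preserving_on nu B' (induced_map g N))
  (C : set X) (mC : measurable C) (CB' : C `<=` B') (nuC : (0 < nu C)%E)
  (Cinv : induced_map g N @` C = C) :
  (1 <= \int[nu]_(x in C) ((N x)%:R : R)%:E)%E.
Proof.
case: g_inv => mg [h [mh gK hK]].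
pose Ck k := C `&` [set y | (k < N y)%N].
have mCk k : measurable (Ck k).
  have -> : Ck k = C `&` (B `&` ((fun x => (N x)%:R : R) @^-1` `]k%:R, +oo[)).
    apply/seteqP; split => x /=.
      move=> [Cx kN]; split=> //; split; first exact/B'B/CB'.
      by rewrite in_itv /= andbT ltr_nat.
    by move=> [Cx [_]]; rewrite in_itv /= andbT ltr_nat.
  by apply: measurableI => //; apply: mN.
have mhk k : measurable_fun setT (iter k h).
  elim: k => [|k IH] /=; first exact: measurable_id.
  exact: (measurableT_comp mh IH).
have hmp A : measurable A -> nu (h @^-1` A) = nu A.
  move=> mA; have mhA : measurable (h @^-1` A).
    by rewrite -[_ @^-1` _]setTI; apply: mh.
  rewrite -(g_mp _ mhA); congr (nu _); apply/seteqP; split => x /=.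
    by rewrite gK.
  by rewrite gK.
have hkmp k A : measurable A -> nu (iter k h @^-1` A) = nu A.
  elim: k A => [|k IH] A mA /=; first by [].
  have mhA : measurable (h @^-1` A).
    by rewrite -[_ @^-1` _]setTI; apply: mh.
  change (nu (iter k h @^-1` (h @^-1` A)) = nu A).
  by rewrite (IH _ mhA) hmp.
have ghK k x : iter k h (iter k g x) = x.
  elim: k x => [|k IH] x //; by rewrite iterSr iterS gK.
have hgK k y : iter k g (iter k h y) = y.
  elim: k y => [|k IH] y //; by rewrite iterSr iterS hK.
have ginj : injective g by exact: can_inj gK.
have CB x : C x -> B x by move=> /CB'/B'B.
pose D := \bigcup_k (iter k h @^-1` Ck k).
have mF k : measurable (iter k h @^-1` Ck k).
  by rewrite -[_ @^-1` _]setTI; apply: mhk.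
have mD : measurable D by apply: bigcupT_measurable.
have Dinv : g @^-1` D = D.
  apply/seteqP; split => y /=.
    move=> [k _ [Cx kN]].
    case: k Cx kN => [|k] Cx kN.
      have : C (g y) by [].
      rewrite -{1}Cinv => -[z Cz].
      rewrite /induced_map.
      have := N_pos _ (CB _ Cz).
      case E: (N z) => [//|m] _ /= /ginj zy.
      rewrite /D; exists m => //; rewrite /Ck /=; rewrite -zy ghK; split => //.
      by rewrite E.
    move: Cx kN; rewrite iterSr /= gK => Cx kN.
    by rewrite /D; exists k => //; split => //; exact: ltnW.
  move=> [k _ [Cx kN]].
  have [kN'|] := ltnP k.+1 (N (iter k h y)).
    rewrite /D; exists k.+1 => //; rewrite /Ck /=.
    by have -> : h (iter k h (g y)) = iter k h y by rewrite -iterS iterSr gK.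
  move=> Nk; have Ek : N (iter k h y) = k.+1 by apply/eqP; rewrite eqn_leq Nk kN.
  have : C (induced_map g N (iter k h y)) by rewrite -Cinv; exists (iter k h y).
  rewrite /induced_map Ek iterS hgK => Cg.
  rewrite /D; exists 0%N => //; split => //=; exact: N_pos (CB _ Cg).
have CD : C `<=` D.
  move=> x Cx; rewrite /D; exists 0%N => //; split => //=; exact: N_pos (CB _ Cx).
have nuD : nu D = 1%E.
  case: (g_erg _ mD Dinv) => // D0.
  have : (nu C <= nu D)%E by apply: le_measure; rewrite ?inE.
  by rewrite D0 => /(lt_le_trans nuC); rewrite ltxx.
rewrite -nuD.
apply: (le_trans (measure_sigma_subadditive nu (A:=D) (F:=fun k => iter k h @^-1` Ck k) mF mD (@subset_refl _ D))).
under eq_eseriesr => k _ do (rewrite /= hkmp //).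
have -> : (\sum_(k <oo) nu (Ck k) =
    \sum_(k <oo) \int[nu]_(x in C) (\1_(Ck k) x)%:E)%E.
  by apply: eq_eseriesr => k _; rewrite integral_indic // setIC /Ck setIA setIid.
rewrite -integral_nneseries //; last first.
  by move=> k; apply/measurable_realfun.measurable_EFinP; exact: measurable_realfun.measurable_indic.
rewrite (eq_integral (fun x => ((N x)%:R : R)%:E)); first exact: lexx.
move=> x /[!inE] Cx.
rewrite (nneseries_split 0 (N x)); last by move=> k _; rewrite lee_fin.
rewrite add0n eseries0 ?adde0; last first.
  move=> i Ni _; rewrite indicE memNset // => -[_ /=]; by rewrite ltnNge Ni.
rewrite (@eq_big_nat _ _ _ 0 (N x) _ (fun _ => 1%:E)); last first.
  by move=> i /andP[_ iN]; rewrite indicE mem_set.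
by rewrite sumEFin sumr_const_nat subn0.
Qed.
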